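(* Let $K$ be a flat virtual knot diagram (one component) whose oriented chord diagram does not admit a filamentation. Then $K$ is not flat equivalent to the trivial flat diagram (an embedded circle with no crossings).
   Context: A flat virtual knot diagram is a generic immersion of an oriented circle in the plane in which each double point is labelled either real (flat, no over/under information) or virtual. Two such diagrams are flat equivalent if they are related by planar isotopy and finitely many flat Reidemeister moves: Reidemeister moves I, II, III with all crossings real and over/under information ignored, the same three moves with all crossings virtual, and the mixed move in which a strand containing two consecutive virtual crossings passes across a real crossing. The oriented chord diagram (OCD) of a flat virtual knot diagram $K$: take a circle $C$, oriented counterclockwise, parametrizing $K$; for each real crossing draw a chord joining the two preimages of that crossing (virtual crossings give no chords). Label each chord endpoint $+$ or $-$: viewing the strand through that endpoint in the direction of its orientation, if the other strand of the crossing passes from right to left label it $+$, otherwise $-$. Each chord $x$ has endpoints $X^+$ and $X^-$. Filamentations. Let ${\mathcal D}$ be an OCD on the circle $C=\partial\Delta$, $\Delta$ a disk. A pairing is a partition of the set of chords into unordered pairs $\{x,y\}$ with $x\neq y$ and self-pairs $(x,x)$. A choice of filaments assigns to each self-pair $(x,x)$ one curve (monofilament) from $X^-$ to $X^+$, and to each pair $(x,y)$ with $x\ne y$ two curves (bifilaments), one from $Y^-$ to $X^+$ and one from $X^-$ to $Y^+$. Each filament is a generically immersed arc in $\Delta$ with the indicated endpoints on $C$ and interior in the interior of $\Delta$, oriented from its $-$ endpoint to its $+$ endpoint; all filaments are in general position. For distinct filaments $\alpha,\gamma$, $\alpha\cdot\gamma$ is the sum over points of $\alpha\cap\gamma$ of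 $+1$ if, looking along $\alpha$, $\gamma$ passes from right to left, and $-1$ otherwise. For a pair $P$ with set of filaments $F(P)$, $I(P)=\sum_{\beta\in F(P)}\sum_{\gamma\notin F(P)}\beta\cdot\gamma$. A filamentation on ${\mathcal D}$ is a pairing with a choice of filaments such that $I(P)=0$ for every pair $P$; ${\mathcal D}$ admits a filamentation if one exists. *)

(* Defs.v *)
From mathcomp Require Import all_boot all_order all_algebra.
Set Implicit Arguments. Unset Strict Implicit. Unset Printing Implicit Defensive.
Import GRing.Theory.

(* An endpoint of a chord: (chord name, sign), sign true = "+", false = "-". *)
Definition endpt := (nat * bool)%type.

(* An oriented chord diagram (OCD) is recorded by the sequence of its chord
   endpoints in the counterclockwise order in which the parametrizing circle
   C meets them (starting point arbitrary; rotations are identified below). *)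
Definition ocd := seq endpt.

Definition labels (w : ocd) : seq nat := undup (map fst w).

Definition valid_ocd (w : ocd) : bool :=
  uniq w && all (fun x => ((x, true) \in w) && ((x, false) \in w)) (labels w).

(* Flat Reidemeister moves on OCDs.  Virtual moves, the mixed move and
   planar isotopy do not change the OCD; the flat real moves act as below. *)

(* The three segments of a flat Reidemeister III triangle.  a = crossing of
   strands 1,2; b = crossing of strands 2,3; c = crossing of strands 3,1;
   s_i = whether strand i is oriented along the counterclockwise boundary of
   the triangle.  The sign at strand i of crossing ij is s_i*s_j, and minus
   that at strand j. *)
Definition r3seg1 (s1 s2 s3 : bool) (a b c : nat) : seq endpt :=
  if s1 then [:: (c, s3 != s1); (a, s1 == s2)] else [:: (a, s1 == s2); (c, s3 != s1)].
Definition r3seg2 (s1 s2 s3 : bool) (a b c : nat) : seq endpt :=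
  if s2 then [:: (a, s1 != s2); (b, s2 == s3)] else [:: (b, s2 == s3); (a, s1 != s2)].
Definition r3seg3 (s1 s2 s3 : bool) (a b c : nat) : seq endpt :=
  if s3 then [:: (b, s2 != s3); (c, s3 == s1)] else [:: (c, s3 == s1); (b, s2 != s3)].

Inductive flat_step : ocd -> ocd -> Prop :=
| FS_rot (w : ocd) (n : nat) : flat_step w (rot n w)
| FS_rename (w : ocd) (f : nat -> nat) :
    injective f -> flat_step w (map (fun e => (f e.1, e.2)) w)
| FS_R1 (u v : ocd) (x : nat) (b : bool) :
    x \notin labels (u ++ v) ->
    flat_step (u ++ v) (u ++ [:: (x, b); (x, ~~ b)] ++ v)
| FS_R2par (u1 u2 u3 : ocd) (x y : nat) (s : bool) :
    x \notin labels (u1 ++ u2 ++ u3) -> y \notin labels (u1 ++ u2 ++ u3) -> x != y ->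
    flat_step (u1 ++ u2 ++ u3)
      (u1 ++ [:: (x, s); (y, ~~ s)] ++ u2 ++ [:: (x, ~~ s); (y, s)] ++ u3)
| FS_R2anti (u1 u2 u3 : ocd) (x y : nat) (s : bool) :
    x \notin labels (u1 ++ u2 ++ u3) -> y \notin labels (u1 ++ u2 ++ u3) -> x != y ->
    flat_step (u1 ++ u2 ++ u3)
      (u1 ++ [:: (x, s); (y, ~~ s)] ++ u2 ++ [:: (y, s); (x, ~~ s)] ++ u3)
| FS_R3 (u0 u1 u2 u3 : ocd) (a b c : nat) (s1 s2 s3 : bool) (A B C : seq endpt) :
    uniq [:: a; b; c] ->
    perm_eq [:: A; B; C]
      [:: r3seg1 s1 s2 s3 a b c; r3seg2 s1 s2 s3 a b c; r3seg3 s1 s2 s3 a b c] ->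
    flat_step (u0 ++ A ++ u1 ++ B ++ u2 ++ C ++ u3)
              (u0 ++ rev A ++ u1 ++ rev B ++ u2 ++ rev C ++ u3).

Inductive flat_equiv : ocd -> ocd -> Prop :=
| FE_refl w : flat_equiv w w
| FE_step w1 w2 : flat_step w1 w2 -> flat_equiv w1 w2
| FE_sym w1 w2 : flat_equiv w1 w2 -> flat_equiv w2 w1
| FE_trans w1 w2 w3 : flat_equiv w1 w2 -> flat_equiv w2 w3 -> flat_equiv w1 w3.

Definition trivial_ocd : ocd := [::].

Definition pos (w : ocd) (e : endpt) : nat := index e w.

Definition inarc (i j k : nat) : bool :=
  if i < j then (i < k) && (k < j) else (i < k) || (k < j).

(* Algebraic intersection number alpha . gamma of two generic arcs in the disk
   with distinct endpoints on C; alpha goes from position a to b, gamma from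
   c to d.  (It depends only on the endpoints: +1 if gamma goes from the
   right of alpha, i.e. the ccw arc (a,b), to its left.) *)
Definition fdot (alpha gamma : nat * nat) : int :=
  let: (a, b) := alpha in let: (c, d) := gamma in
  if inarc a b c && ~~ inarc a b d then 1%R
  else if ~~ inarc a b c && inarc a b d then (-1)%R else 0%R.

(* A pairing is an involution p on the chords (p x = x: self-pair). *)
Definition is_pairing (w : ocd) (p : nat -> nat) : Prop :=
  forall x, x \in labels w -> (p x \in labels w) /\ p (p x) = x.

(* The filament ending at X^+: from (p x)^- to X^+.  For a self-pair this is
   the monofilament X^- -> X^+; for a pair {x,y} these are the two
   bifilaments Y^- -> X^+ and X^- -> Y^+. *)
Definition filament (w : ocd) (p : nat -> nat) (x : nat) : nat * nat :=
  (pos w (p x, false), pos w (x, true)).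

Definition pair_members (p : nat -> nat) (x : nat) : seq nat :=
  if p x == x then [:: x] else [:: x; p x].

Definition Iof (w : ocd) (p : nat -> nat) (x : nat) : int :=
  \sum_(u <- pair_members p x)
    \sum_(z <- labels w | z \notin pair_members p x)
      fdot (filament w p u) (filament w p z).

Definition admits_filamentation (w : ocd) : Prop :=
  exists p : nat -> nat, is_pairing w p /\
    forall x, x \in labels w -> Iof w p x = 0%R.

(* Main.v *)
Require Import Defs.
From mathcomp Require Import all_boot all_order all_algebra zify ring.
Set Implicit Arguments. Unset Strict Implicit. Unset Printing Implicit Defensive.
Import GRing.Theory Num.Theory Order.TTheory.
Local Open Scope ring_scope.

Definition sg (e : endpt) : int := if e.2 then -1 else 1.
Definition ssum (s : seq endpt) : int := \sum_(e <- s) sg e.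
Definition before (w : ocd) (e : endpt) : int := ssum (take (index e w) w).
Definition ind (w : ocd) (x : nat) : int :=
  before w (x, true) - before w (x, false) - 1.
Definition balanced (w : ocd) : Prop := forall n : int,
  count (fun z => ind w z == n) (labels w) = count (fun z => ind w z == - n) (labels w).
Definition bz (b : bool) : int := if b then 1 else 0.

Lemma ssum_cat (u v : seq endpt) : ssum (u ++ v) = ssum u + ssum v.
Proof. by rewrite /ssum big_cat. Qed.

Lemma ssum_rev (u : seq endpt) : ssum (rev u) = ssum u.
Proof. by rewrite /ssum big_rev. Qed.

Lemma before_cat (u v : seq endpt) e :
  before (u ++ v) e = if e \in u then before u e else ssum u + before v e.
Proof.
rewrite /before index_cat; case: ifP => h.
  by rewrite take_cat index_mem h.
rewrite take_cat ltnNge leq_addr /= addKn; exact: ssum_cat.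
Qed.

Lemma before_ins (u m v : seq endpt) e : ssum m = 0 -> e \notin m ->
  before (u ++ m ++ v) e = before (u ++ v) e.
Proof.
move=> s0 nm; rewrite !before_cat (negbTE nm); case: ifP => // _.
by rewrite s0 add0r.
Qed.

Lemma mem_labels w z : (z \in labels w) = (z \in map fst w).
Proof. by rewrite /labels mem_undup. Qed.

Lemma labels_mem w e : e \in w -> e.1 \in labels w.
Proof. by move=> h; rewrite mem_labels map_f. Qed.

Definition ends (Ls : seq nat) : seq endpt :=
  flatten [seq [:: (z, true); (z, false)] | z <- Ls].

Lemma mem_ends Ls e : (e \in ends Ls) = (e.1 \in Ls).
Proof.
elim: Ls => [|z Ls IH] //=.
rewrite mem_cat IH !inE; congr (_ || _).
case: e {IH} => y [] /=; rewrite !xpair_eqE /= ?andbT ?andbF ?orbF //.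
Qed.

Lemma uniq_ends Ls : uniq Ls -> uniq (ends Ls).
Proof.
elim: Ls => [|z Ls IH] //= /andP [zn u].
rewrite -/(ends Ls) in_cons !mem_ends /= (negbTE zn) IH // orbF andbT.
by rewrite xpair_eqE andbF.
Qed.

Lemma valid_mem w e : valid_ocd w -> (e \in w) = (e.1 \in labels w).
Proof.
case/andP=> _ /allP h; apply/idP/idP; first exact: labels_mem.
by move/h; case: e => y [] /= /andP[].
Qed.

Lemma valid_uniq w : valid_ocd w -> uniq w.
Proof. by case/andP. Qed.

Lemma perm_filter_ends w (P : pred nat) : valid_ocd w ->
  perm_eq (filter (fun e => P e.1) w) (ends (filter P (labels w))).
Proof.
move=> vw; apply: uniq_perm.
- by rewrite filter_uniq // valid_uniq.
- by rewrite uniq_ends // filter_uniq // undup_uniq.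
by move=> e; rewrite mem_filter mem_ends mem_filter (valid_mem _ vw) andbC.
Qed.

Lemma sum_PL w (P : pred nat) (F : endpt -> int) : valid_ocd w ->
  \sum_(e <- w | P e.1) F e = \sum_(z <- labels w | P z) (F (z, true) + F (z, false)).
Proof.
move=> vw; rewrite -big_filter (perm_big _ (perm_filter_ends P vw)) /ends.
rewrite big_flatten big_map big_filter /=; apply: eq_bigr => z _.
by rewrite !big_cons big_nil addr0.
Qed.

Lemma ssum0 w : valid_ocd w -> ssum w = 0.
Proof.
move=> vw; rewrite /ssum -(big_filter _ (fun e : endpt => predT e.1)) big_filter.
rewrite (sum_PL predT sg vw) big1 // => z _; by rewrite /sg /= addrC subrr.
Qed.

Lemma notin_labels x c (s : seq endpt) : x \notin labels s -> (x, c) \notin s.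
Proof. by apply: contra => /labels_mem. Qed.

Lemma labels_cat (u v : seq endpt) : labels (u ++ v) =i [predU labels u & labels v].
Proof. by move=> z; rewrite !inE !mem_labels map_cat mem_cat. Qed.

Lemma valid_perm w1 w2 : perm_eq w1 w2 -> valid_ocd w1 = valid_ocd w2.
Proof.
move=> p; rewrite /valid_ocd (perm_uniq p); congr andb.
have hl : labels w1 =i labels w2.
  by move=> z; rewrite !mem_labels; apply: perm_mem; apply: perm_map.
rewrite (eq_all_r hl); apply: eq_all => z; by rewrite !(perm_mem p).
Qed.

Lemma labels_perm w1 w2 : perm_eq w1 w2 -> perm_eq (labels w1) (labels w2).
Proof.
move=> p; apply: perm_undup; apply: perm_mem; exact: perm_map.
Qed.

Lemma labels_ends x b w : x \notin labels w ->
  labels ([:: (x, b); (x, ~~ b)] ++ w) = x :: labels w.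
Proof.
move=> xn; rewrite /labels /= mem_head.
by rewrite -mem_labels (negbTE xn).
Qed.

Lemma valid_ends x b w : x \notin labels w ->
  valid_ocd ([:: (x, b); (x, ~~ b)] ++ w) = valid_ocd w.
Proof.
move=> xn; rewrite /valid_ocd labels_ends //= .
have n1 : forall c, (x, c) \notin w by move=> c; exact: notin_labels.
have m1 := negbTE (n1 true); have m2 := negbTE (n1 false).
rewrite !inE.
case: b; rewrite !xpair_eqE !eqxx /= m1 m2 /=; congr andb;
apply: eq_in_all => z zl /=;
have zx : (z == x) = false by [apply/negbTE; apply: contraNneq xn => <-];
by rewrite !inE !xpair_eqE zx.
Qed.

Lemma ssum_pair (x : nat) (b : bool) : ssum [:: (x, b); (x, ~~ b)] = 0.
Proof. by case: b; rewrite /ssum !big_cons big_nil /sg /=. Qed.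

Lemma notin_pair (x : nat) (b : bool) (z : nat) (c : bool) : z != x -> (z, c) \notin [:: (x, b); (x, ~~ b)].
Proof. by move=> zx; rewrite !inE !xpair_eqE (negbTE zx). Qed.

Lemma R1_ind (u v : seq endpt) (x : nat) (b : bool) (z : nat) : z != x ->
  ind (u ++ [:: (x, b); (x, ~~ b)] ++ v) z = ind (u ++ v) z.
Proof.
move=> zx; rewrite /ind !before_ins ?ssum_pair ?notin_pair //.
Qed.

Lemma notin_labels_cat (u v : seq endpt) (x : nat) (c : bool) :
  x \notin labels (u ++ v) -> ((x, c) \notin u) && ((x, c) \notin v).
Proof.
move=> h; rewrite !notin_labels //; apply: contra h; rewrite labels_cat inE => ->;
  by rewrite ?orbT.
Qed.

Lemma before2a (e1 e2 : endpt) : before [:: e1; e2] e1 = 0.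
Proof. by rewrite /before /= eqxx /= /ssum big_nil. Qed.

Lemma before2b (e1 e2 : endpt) : e1 != e2 -> before [:: e1; e2] e2 = sg e1.
Proof.
by move=> h; rewrite /before /= (negbTE h) eqxx /= /ssum big_cons big_nil addr0.
Qed.

Lemma R1_indx (u v : seq endpt) (x : nat) (b : bool) : x \notin labels (u ++ v) ->
  ind (u ++ [:: (x, b); (x, ~~ b)] ++ v) x = 0.
Proof.
move=> h; rewrite /ind !before_cat.
case/andP: (notin_labels_cat true h) => /negbTE -> _.
case/andP: (notin_labels_cat false h) => /negbTE -> _.
case: b; rewrite !inE !xpair_eqE /= ?before2a ?before2b ?xpair_eqE ?eqxx //= /sg /=; lia.
Qed.

Lemma before_ins2 (u1 m1 u2 m2 u3 : seq endpt) e :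
  ssum m1 = 0 -> ssum m2 = 0 -> e \notin m1 -> e \notin m2 ->
  before (u1 ++ m1 ++ u2 ++ m2 ++ u3) e = before (u1 ++ u2 ++ u3) e.
Proof.
move=> s1 s2 n1 n2; rewrite before_ins // catA before_ins // -catA //.
Qed.

Lemma notin3 (u1 u2 u3 : seq endpt) (x : nat) (c : bool) :
  x \notin labels (u1 ++ u2 ++ u3) ->
  [/\ ((x, c) \in u1) = false, ((x, c) \in u2) = false & ((x, c) \in u3) = false].
Proof.
move=> h; have := notin_labels c h; rewrite !mem_cat !negb_or.
by case/and3P => /negbTE -> /negbTE -> /negbTE ->.
Qed.

Definition R2m1 (x y : nat) (s : bool) : seq endpt := [:: (x, s); (y, ~~ s)].
Definition R2m2 (x y : nat) (s : bool) (par : bool) : seq endpt :=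
  if par then [:: (x, ~~ s); (y, s)] else [:: (y, s); (x, ~~ s)].

Lemma R2_other (u1 u2 u3 : seq endpt) (x y : nat) (s par : bool) (z : nat) :
  z != x -> z != y ->
  ind (u1 ++ R2m1 x y s ++ u2 ++ R2m2 x y s par ++ u3) z = ind (u1 ++ u2 ++ u3) z.
Proof.
move=> zx zy; rewrite /ind !before_ins2 //;
  rewrite /R2m1 /R2m2 ?/ssum; try (case: par); case: s;
  rewrite ?big_cons ?big_nil /sg /= ?inE ?xpair_eqE ?(negbTE zx) ?(negbTE zy) //.
Qed.

Lemma R2_xy (u1 u2 u3 : seq endpt) (x y : nat) (s par : bool) :
  x \notin labels (u1 ++ u2 ++ u3) -> y \notin labels (u1 ++ u2 ++ u3) -> x != y ->
  ind (u1 ++ R2m1 x y s ++ u2 ++ R2m2 x y s par ++ u3) x +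
  ind (u1 ++ R2m1 x y s ++ u2 ++ R2m2 x y s par ++ u3) y = 0.
Proof.
move=> hx hy xy; have yx : y != x by rewrite eq_sym.
rewrite /ind !before_cat.
case: (notin3 true hx) => a1 a2 _; case: (notin3 false hx) => b1 b2 _.
case: (notin3 true hy) => c1 c2 _; case: (notin3 false hy) => d1 d2 _.
rewrite a1 a2 b1 b2 c1 c2 d1 d2.
rewrite /R2m1 /R2m2; case: par; case: s;
  rewrite /= !inE !xpair_eqE /= ?eqxx ?(negbTE xy) ?(negbTE yx) /=
    ?before2a ?before2b ?xpair_eqE ?(negbTE xy) ?(negbTE yx) //
    /ssum ?big_cons ?big_nil /sg /=; lia.
Qed.

Definition Dl (S : seq endpt) (e : endpt) : int := before (rev S) e - before S e.

Lemma before_revmid (u S R R' : seq endpt) e :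
  before (u ++ rev S ++ R') e - before (u ++ S ++ R) e =
  if e \in u then 0 else if e \in S then Dl S e else before R' e - before R e.
Proof.
rewrite !before_cat mem_rev; case: ifP => _; first by rewrite subrr.
rewrite /Dl; case: ifP => _; first by lia.
rewrite ssum_rev; lia.
Qed.

Lemma uniq_notin (p q : seq endpt) e : uniq (p ++ q) -> e \in q -> (e \in p) = false.
Proof.
rewrite cat_uniq => /and3P [_ h _] eq; apply/negP => ep; case/negP: h.
by apply/hasP; exists e.
Qed.

Lemma uniq_r (p q : seq endpt) : uniq (p ++ q) -> uniq q.
Proof. by rewrite cat_uniq => /and3P []. Qed.

Lemma R3_delta (u0 u1 u2 u3 A B C S : seq endpt) e :
  uniq (u0 ++ A ++ u1 ++ B ++ u2 ++ C ++ u3) -> S \in [:: A; B; C] -> e \in S ->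
  before (u0 ++ rev A ++ u1 ++ rev B ++ u2 ++ rev C ++ u3) e -
  before (u0 ++ A ++ u1 ++ B ++ u2 ++ C ++ u3) e = Dl S e.
Proof.
move=> U; have U1 := uniq_r U; have U2 := uniq_r U1; have U3 := uniq_r U2.
have U4 := uniq_r U3; have U5 := uniq_r U4.
rewrite !inE => /or3P [] /eqP -> eS; rewrite before_revmid.
- by rewrite (uniq_notin U) ?eS // !mem_cat eS.
- rewrite (uniq_notin U) ?(uniq_notin U1) ?before_revmid; try by rewrite !mem_cat eS ?orbT.
  by rewrite (uniq_notin U2) ?eS // !mem_cat eS.
- rewrite (uniq_notin U) ?(uniq_notin U1) ?before_revmid; try by rewrite !mem_cat eS ?orbT.
  rewrite (uniq_notin U2) ?(uniq_notin U3); try by rewrite !mem_cat eS ?orbT.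
  by rewrite (uniq_notin U4) ?eS // !mem_cat eS.
Qed.

Lemma R3_delta0 (u0 u1 u2 u3 A B C : seq endpt) e :
  e \notin A -> e \notin B -> e \notin C ->
  before (u0 ++ rev A ++ u1 ++ rev B ++ u2 ++ rev C ++ u3) e =
  before (u0 ++ A ++ u1 ++ B ++ u2 ++ C ++ u3) e.
Proof.
move=> eA eB eC; apply/eqP; rewrite -subr_eq0; apply/eqP.
rewrite before_revmid (negbTE eA); case: ifP => // _.
rewrite before_revmid (negbTE eB); case: ifP => // _.
rewrite before_revmid (negbTE eC); case: ifP => // _.
by rewrite subrr.
Qed.

Lemma rev2 (e1 e2 : endpt) : rev [:: e1; e2] = [:: e2; e1].
Proof. by []. Qed.

Lemma Dl2a (e1 e2 : endpt) : e1 != e2 -> Dl [:: e1; e2] e1 = sg e2.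
Proof. by move=> h; rewrite /Dl rev2 before2a before2b 1?eq_sym // subr0. Qed.

Lemma Dl2b (e1 e2 : endpt) : e1 != e2 -> Dl [:: e1; e2] e2 = - sg e1.
Proof. by move=> h; rewrite /Dl rev2 before2a before2b // sub0r. Qed.

Lemma seg_abc (a b c : nat) :
  a != b -> b != c -> a != c -> forall s1 s2 s3 : bool,
  [/\ Dl (r3seg1 s1 s2 s3 a b c) (a, s1 == s2) = Dl (r3seg2 s1 s2 s3 a b c) (a, s1 != s2),
      Dl (r3seg2 s1 s2 s3 a b c) (b, s2 == s3) = Dl (r3seg3 s1 s2 s3 a b c) (b, s2 != s3)
    & Dl (r3seg1 s1 s2 s3 a b c) (c, s3 != s1) = Dl (r3seg3 s1 s2 s3 a b c) (c, s3 == s1)].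
Proof.
move=> ab bc ac.
have ba : b != a by rewrite eq_sym. have cb : c != b by rewrite eq_sym.
have ca : c != a by rewrite eq_sym.
case; case; case; rewrite /r3seg1 /r3seg2 /r3seg3 /=;
  rewrite ?Dl2a ?Dl2b ?xpair_eqE ?(negbTE ab) ?(negbTE bc) ?(negbTE ac)
    ?(negbTE ba) ?(negbTE cb) ?(negbTE ca) //.
Qed.

Lemma seg_labels (a b c : nat) (s1 s2 s3 : bool) S e :
  S \in [:: r3seg1 s1 s2 s3 a b c; r3seg2 s1 s2 s3 a b c; r3seg3 s1 s2 s3 a b c] ->
  e \in S -> e.1 \in [:: a; b; c].
Proof.
move=> hS he; move: hS he; rewrite !inE => /or3P [] /eqP ->;
  rewrite /r3seg1 /r3seg2 /r3seg3; case: ifP => _;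
  rewrite !inE => /orP [] /eqP -> /=; by rewrite eqxx ?orbT.
Qed.

Lemma seg_mem (a b c : nat) (s1 s2 s3 : bool) :
  [/\ (a, s1 == s2) \in r3seg1 s1 s2 s3 a b c, (a, s1 != s2) \in r3seg2 s1 s2 s3 a b c,
      (b, s2 == s3) \in r3seg2 s1 s2 s3 a b c & (b, s2 != s3) \in r3seg3 s1 s2 s3 a b c].
Proof.
rewrite /r3seg1 /r3seg2 /r3seg3.
split; case: s1; case: s2; case: s3; rewrite /= ?inE ?eqxx ?orbT //.
Qed.

Lemma seg_memc (a b c : nat) (s1 s2 s3 : bool) :
  (c, s3 != s1) \in r3seg1 s1 s2 s3 a b c /\ (c, s3 == s1) \in r3seg3 s1 s2 s3 a b c.
Proof.
rewrite /r3seg1 /r3seg2 /r3seg3.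
split; case: s1; case: s2; case: s3; rewrite /= ?inE ?eqxx ?orbT //.
Qed.

Lemma R3_ind (u0 u1 u2 u3 A B C : seq endpt) (a b c : nat) (s1 s2 s3 : bool) z :
  uniq (u0 ++ A ++ u1 ++ B ++ u2 ++ C ++ u3) -> uniq [:: a; b; c] ->
  perm_eq [:: A; B; C]
      [:: r3seg1 s1 s2 s3 a b c; r3seg2 s1 s2 s3 a b c; r3seg3 s1 s2 s3 a b c] ->
  ind (u0 ++ rev A ++ u1 ++ rev B ++ u2 ++ rev C ++ u3) z =
  ind (u0 ++ A ++ u1 ++ B ++ u2 ++ C ++ u3) z.
Proof.
move=> U uabc P.
set w' := (u0 ++ rev A ++ _); set w := (u0 ++ A ++ _).
suff : (before w' (z, true) - before w (z, true)) - (before w' (z, false) - before w (z, false)) = 0.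
  by rewrite /ind; lia.
have inS : forall S, (S \in [:: A; B; C]) =
   (S \in [:: r3seg1 s1 s2 s3 a b c; r3seg2 s1 s2 s3 a b c; r3seg3 s1 s2 s3 a b c]).
  by move=> S; apply: perm_mem.
have hS1 : r3seg1 s1 s2 s3 a b c \in [:: A; B; C] by rewrite inS !inE eqxx.
have hS2 : r3seg2 s1 s2 s3 a b c \in [:: A; B; C] by rewrite inS !inE eqxx ?orbT.
have hS3 : r3seg3 s1 s2 s3 a b c \in [:: A; B; C] by rewrite inS !inE eqxx ?orbT.
move: uabc; rewrite /= !inE negb_or => /andP [/andP [ab ac] /andP [bc _]].
case: (seg_abc ab bc ac s1 s2 s3) => Ea Eb Ec.
case: (seg_mem a b c s1 s2 s3) => ma1 ma2 mb1 mb2.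
case: (seg_memc a b c s1 s2 s3) => mc1 mc2.
have D := R3_delta U.
have [za|zna] := eqVneq z a.
  rewrite za; have E1 := D _ _ hS1 ma1; have E2 := D _ _ hS2 ma2.
  move: E1 E2; rewrite -Ea; case: (s1 == s2) => /= -> ->; by rewrite subrr.
have [zb|znb] := eqVneq z b.
  rewrite zb; have E1 := D _ _ hS2 mb1; have E2 := D _ _ hS3 mb2.
  move: E1 E2; rewrite -Eb; case: (s2 == s3) => /= -> ->; by rewrite subrr.
have [zc|znc] := eqVneq z c.
  rewrite zc; have E1 := D _ _ hS1 mc1; have E2 := D _ _ hS3 mc2.
  move: E1 E2; rewrite Ec; case: (s3 == s1) => /= -> ->; by rewrite subrr.
have nS : forall t S, S \in [:: A; B; C] -> (z, t) \notin S.
  move=> t S; rewrite inS => hS; apply/negP => /(seg_labels hS) /=.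
  by rewrite !inE (negbTE zna) (negbTE znb) (negbTE znc).
rewrite /w /w' !R3_delta0 ?nS ?subrr //; by rewrite !inE eqxx ?orbT.
Qed.

Lemma before_rot (w : ocd) n e : uniq w -> e \in w -> ssum w = 0 ->
  before (rot n w) e = before w e - ssum (take n w).
Proof.
move=> U ew s0; rewrite /rot before_cat.
have U' : uniq (take n w ++ drop n w) by rewrite cat_take_drop.
have -> : before w e = before (take n w ++ drop n w) e by rewrite cat_take_drop.
rewrite before_cat.
have hs : ssum (take n w) + ssum (drop n w) = 0 by rewrite -ssum_cat cat_take_drop.
case: ifP => ed.
  by rewrite (uniq_notin U' ed); lia.
have et : e \in take n w.
  by move: ew; rewrite -{1}(cat_take_drop n w) mem_cat ed orbF.
by rewrite et; lia.
Qed.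

Lemma rot_ind (w : ocd) n z : valid_ocd w -> z \in labels w ->
  ind (rot n w) z = ind w z.
Proof.
move=> vw zl; have U := valid_uniq vw; have s0 := ssum0 vw.
rewrite /ind !before_rot //; try lia; by rewrite (valid_mem _ vw).
Qed.

Lemma rename_ind (w : ocd) (f : nat -> nat) z : injective f ->
  ind [seq (f e.1, e.2) | e <- w] (f z) = ind w z.
Proof.
move=> fi; set g := fun e : endpt => (f e.1, e.2).
have gi : injective g by move=> [x1 b1] [x2 b2] [] /fi -> ->.
have bg : forall e, before (map g w) (g e) = before w e.
  move=> e; rewrite /before (index_map gi) -map_take /ssum big_map.
  by apply: eq_bigr => -[y c].
by rewrite /ind -!(bg (_, _)).
Qed.

Lemma rename_labels (w : ocd) (f : nat -> nat) : injective f ->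
  labels [seq (f e.1, e.2) | e <- w] = map f (labels w).
Proof.
move=> fi; rewrite /labels -map_comp -(undup_map_inj fi) -map_comp.
by congr undup; apply: eq_map.
Qed.

Lemma rename_valid (w : ocd) (f : nat -> nat) : injective f ->
  valid_ocd [seq (f e.1, e.2) | e <- w] = valid_ocd w.
Proof.
move=> fi; set g := fun e : endpt => (f e.1, e.2).
have gi : injective g by move=> [x1 b1] [x2 b2] [] /fi -> ->.
rewrite /valid_ocd (map_inj_uniq gi) rename_labels // all_map; congr andb.
apply: eq_all => z /=.
by rewrite -[(f z, true)]/(g (z, true)) -[(f z, false)]/(g (z, false)) !(mem_map gi).
Qed.

Lemma bal_perm w1 w2 : perm_eq (labels w1) (labels w2) ->
  {in labels w1, forall z, ind w2 z = ind w1 z} -> balanced w1 <-> balanced w2.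
Proof.
move=> p e.
have C : forall n, count (fun z => ind w2 z == n) (labels w2) =
                   count (fun z => ind w1 z == n) (labels w1).
  move=> n; rewrite -(permP p); apply: eq_in_count => z zl /=; by rewrite e.
by split => h n; [rewrite !C | rewrite -!C].
Qed.

Lemma eq_oppsw (i n : int) : (i == - n) = (- i == n).
Proof. by rewrite eqr_oppLR. Qed.

Lemma bal_add1 w1 w2 x : perm_eq (labels w2) (x :: labels w1) ->
  {in labels w1, forall z, ind w2 z = ind w1 z} -> ind w2 x = 0 ->
  balanced w1 <-> balanced w2.
Proof.
move=> p e ix.
have C : forall n, count (fun z => ind w2 z == n) (labels w2) =
   (((0:int) == n) + count (fun z => ind w1 z == n) (labels w1))%N.
  move=> n; rewrite (permP p) /= ix; congr addn; apply: eq_in_count => z zl /=; by rewrite e.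
have E : forall n : int, ((0:int) == - n) = ((0:int) == n) by move=> n; rewrite eq_oppsw oppr0.
split => h n.
  by rewrite !C h E.
by have := h n; rewrite !C E => /addnI.
Qed.

Lemma bal_add2 w1 w2 x y : perm_eq (labels w2) (x :: y :: labels w1) ->
  {in labels w1, forall z, ind w2 z = ind w1 z} -> ind w2 x + ind w2 y = 0 ->
  balanced w1 <-> balanced w2.
Proof.
move=> p e ixy.
have iy : ind w2 y = - ind w2 x by apply/eqP; rewrite -addr_eq0 addrC ixy.
have C : forall n, count (fun z => ind w2 z == n) (labels w2) =
   ((ind w2 x == n) + (- ind w2 x == n) + count (fun z => ind w1 z == n) (labels w1))%N.
  move=> n; rewrite (permP p) /= iy addnA; congr addn; apply: eq_in_count => z zl /=; by rewrite e.
have E : forall n, ((ind w2 x == - n) + (- ind w2 x == - n))%N = ((ind w2 x == n) + (- ind w2 x == n))%N.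
  by move=> n; rewrite eqr_opp eq_oppsw addnC.
split => h n.
  by rewrite !C E h.
by have := h n; rewrite !C E => /addnI.
Qed.

Definition Inv w := valid_ocd w /\ balanced w.

Lemma inv_of w1 w2 : valid_ocd w1 = valid_ocd w2 ->
  (valid_ocd w1 -> (balanced w1 <-> balanced w2)) -> (Inv w1 <-> Inv w2).
Proof.
move=> hv hb; split => -[v b]; split.
- by rewrite -hv.
- by apply/hb.
- by rewrite hv.
- by apply/hb => //; rewrite hv.
Qed.

Lemma R2_perm (u1 u2 u3 : seq endpt) (x y : nat) (s par : bool) :
  perm_eq (u1 ++ R2m1 x y s ++ u2 ++ R2m2 x y s par ++ u3)
          ([:: (x, s); (x, ~~ s)] ++ [:: (y, ~~ s); (y, ~~ ~~ s)] ++ (u1 ++ u2 ++ u3)).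
Proof.
rewrite negbK /R2m1 /R2m2; apply/permP => P; case: par;
  rewrite !count_cat /=; lia.
Qed.

Lemma step_inv w1 w2 : flat_step w1 w2 -> (Inv w1 <-> Inv w2).
Proof.
case.
-
  move=> w n; have p : perm_eq w (rot n w) by rewrite perm_sym perm_rot.
  apply: inv_of; first exact: valid_perm.
  move=> vw; apply: bal_perm; first exact: labels_perm.
  by move=> z zl; apply: rot_ind.
-
  move=> w f fi; apply: inv_of; first by rewrite rename_valid.
  move=> _; rewrite /balanced rename_labels //.
  have C : forall n, count (fun z => ind [seq (f e.1, e.2) | e <- w] z == n) (map f (labels w))
     = count (fun z => ind w z == n) (labels w).
    by move=> n; rewrite count_map; apply: eq_count => z /=; rewrite rename_ind.
  by split => h n; [rewrite !C | rewrite -!C].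
-
  move=> u v x b hx.
  have p : perm_eq (u ++ [:: (x, b); (x, ~~ b)] ++ v) ([:: (x, b); (x, ~~ b)] ++ (u ++ v)).
    by rewrite perm_catCA.
  apply: inv_of; first by rewrite (valid_perm p) valid_ends.
  move=> _; apply: (@bal_add1 _ _ x).
  + by rewrite -(labels_ends b hx); apply: labels_perm.
  + move=> z zl; apply: R1_ind; by apply: contraNneq hx => <-.
  + exact: R1_indx.
-
  move=> u1 u2 u3 x y s hx hy xy.
  have p := R2_perm u1 u2 u3 x y s true.
  have hy' : x \notin labels ([:: (y, ~~ s); (y, ~~ ~~ s)] ++ (u1 ++ u2 ++ u3)).
    by rewrite labels_ends // inE negb_or xy hx.
  apply: inv_of.
    by rewrite -[_ ++ _ ++ _ ++ _ ++ u3]/(u1 ++ R2m1 x y s ++ u2 ++ R2m2 x y s true ++ u3)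
      (valid_perm p) valid_ends // valid_ends.
  move=> _; apply: (@bal_add2 _ _ x y).
  + rewrite -[_ ++ _ ++ _ ++ _ ++ u3]/(u1 ++ R2m1 x y s ++ u2 ++ R2m2 x y s true ++ u3).
    rewrite (perm_trans (labels_perm p)) // labels_ends // labels_ends //.
  + move=> z zl; have zx : z != x by apply: contraNneq hx => <-.
    have zy : z != y by apply: contraNneq hy => <-.
    exact: (R2_other u1 u2 u3 s true zx zy).
  + exact: (R2_xy s true hx hy xy).
-
  move=> u1 u2 u3 x y s hx hy xy.
  have p := R2_perm u1 u2 u3 x y s false.
  have hy' : x \notin labels ([:: (y, ~~ s); (y, ~~ ~~ s)] ++ (u1 ++ u2 ++ u3)).
    by rewrite labels_ends // inE negb_or xy hx.
  apply: inv_of.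
    by rewrite -[_ ++ _ ++ _ ++ _ ++ u3]/(u1 ++ R2m1 x y s ++ u2 ++ R2m2 x y s false ++ u3)
      (valid_perm p) valid_ends // valid_ends.
  move=> _; apply: (@bal_add2 _ _ x y).
  + rewrite -[_ ++ _ ++ _ ++ _ ++ u3]/(u1 ++ R2m1 x y s ++ u2 ++ R2m2 x y s false ++ u3).
    rewrite (perm_trans (labels_perm p)) // labels_ends // labels_ends //.
  + move=> z zl; have zx : z != x by apply: contraNneq hx => <-.
    have zy : z != y by apply: contraNneq hy => <-.
    exact: (R2_other u1 u2 u3 s false zx zy).
  + exact: (R2_xy s false hx hy xy).
-
  move=> u0 u1 u2 u3 a b c s1 s2 s3 A B C uabc P.
  have p : perm_eq (u0 ++ A ++ u1 ++ B ++ u2 ++ C ++ u3)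
                   (u0 ++ rev A ++ u1 ++ rev B ++ u2 ++ rev C ++ u3).
    have r : forall S : seq endpt, perm_eq S (rev S) by move=> S; rewrite perm_sym perm_rev.
    by rewrite perm_cat2l; apply: perm_cat (r _) _; rewrite perm_cat2l;
      apply: perm_cat (r _) _; rewrite perm_cat2l; apply: perm_cat (r _) _.
  apply: inv_of; first exact: valid_perm.
  move=> vw; apply: bal_perm; first exact: labels_perm.
  move=> z _; exact: (R3_ind _ (valid_uniq vw) uabc P).
Qed.

Lemma equiv_inv w1 w2 : flat_equiv w1 w2 -> (Inv w1 <-> Inv w2).
Proof.
elim=> {w1 w2} [w|w1 w2 /step_inv //|w1 w2 _ IH|w1 w2 w3 _ IH1 _ IH2].
- by [].
- by split => h; apply/IH.
- by split => h; [apply/IH2/IH1 | apply/IH1/IH2].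
Qed.

Lemma fdotE a b c d : fdot (a, b) (c, d) = bz (inarc a b c) - bz (inarc a b d).
Proof. by rewrite /fdot /bz; case: (inarc a b c); case: (inarc a b d). Qed.

Lemma inarc_decomp (a b k : nat) : a != b ->
  bz (inarc a b k) = bz (k < b)%N - bz (k < a)%N - bz (k == a) + bz (b < a)%N.
Proof.
move=> ab; rewrite /inarc /bz.
case: (ltngtP a b) => h1; case: (ltngtP k a) => h2; case: (ltngtP k b) => h3;
  rewrite /= ?andbF ?andbT ?orbF ?orbT //; try lia.
Qed.

Lemma take_sum (w : seq endpt) (F : endpt -> int) k : uniq w ->
  \sum_(e <- take k w) F e = \sum_(e <- w) F e * bz (index e w < k)%N.
Proof.
elim: w k => [|y w IH] k /=; first by rewrite !big_nil.
case/andP => yn U; case: k => [|k].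
  by rewrite big_nil big_cons eqxx /bz /= mulr0 add0r big1 // => e _; rewrite mulr0.
rewrite !big_cons eqxx /bz /= mulr1 IH //; congr (_ + _).
rewrite big_seq [RHS]big_seq; apply: eq_bigr => e ew.
have -> : (y == e) = false by apply/negbTE; apply: contraNneq yn => ->.
by [].
Qed.

Definition Phi (w : ocd) (k : nat) : int := \sum_(e <- w) sg e * bz (index e w < k)%N.
Definition Psi (w : ocd) (pm : seq nat) (k : nat) : int :=
  \sum_(e <- w | e.1 \notin pm) sg e * bz (index e w < k)%N.
Definition Qs (w : ocd) (pm : seq nat) (k : nat) : int :=
  \sum_(e <- w | e.1 \in pm) sg e * bz (index e w < k)%N.

Lemma before_Phi w t : uniq w -> before w t = Phi w (index t w).
Proof. by move=> U; rewrite /before /ssum take_sum. Qed.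

Lemma PhiE w pm k : Phi w k = Qs w pm k + Psi w pm k.
Proof. by rewrite /Phi (bigID (fun e : endpt => e.1 \in pm)) /=. Qed.

Lemma index_neq (w : seq endpt) e1 e2 : e1 \in w -> e1 != e2 -> index e1 w != index e2 w.
Proof.
move=> h1; apply: contra => /eqP h.
have h2 : e2 \in w by rewrite -index_mem -h index_mem.
by rewrite -(nth_index e1 h1) h nth_index.
Qed.

Lemma index_eq_elt (w : seq endpt) e1 e2 : e1 \in w -> e2 \in w -> index e1 w = index e2 w -> e1 = e2.
Proof. by move=> h1 h2 h; rewrite -(nth_index e1 h1) h nth_index. Qed.

Section Bridge.
Variables (w : ocd) (p : nat -> nat) (pm : seq nat).
Hypothesis vw : valid_ocd w.
Hypothesis H1 : forall z, z \in labels w -> (p z \in labels w) /\ p (p z) = z.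
Hypothesis H2 : {subset pm <= labels w}.
Hypothesis H3 : {in pm, forall u, p u \in pm}.

Lemma pm_out z : z \in labels w -> z \notin pm -> p z \notin pm.
Proof.
move=> zl zn; apply/negP => h; have := H3 h; case: (H1 zl) => _ ->.
by rewrite (negbTE zn).
Qed.

Lemma reindex (H : nat -> int) :
  \sum_(z <- labels w | z \notin pm) H (p z) = \sum_(z <- labels w | z \notin pm) H z.
Proof.
rewrite -[LHS]big_filter -[RHS]big_filter; set L := filter _ _.
have -> : \sum_(z <- L) H (p z) = \sum_(z <- map p L) H z by rewrite big_map.
apply: perm_big.
have memL : forall z, (z \in L) = (z \in labels w) && (z \notin pm) by move=> z; rewrite mem_filter andbC.
apply: uniq_perm.
- rewrite map_inj_in_uniq ?filter_uniq ?undup_uniq //.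
  move=> z1 z2; rewrite !memL => /andP [h1 _] /andP [h2 _] e.
  by case: (H1 h1) => _ <-; case: (H1 h2) => _ <-; rewrite e.
- by rewrite filter_uniq ?undup_uniq.
move=> z; apply/mapP/idP.
  by case=> z' ; rewrite memL => /andP [h1 h2] ->; rewrite memL (pm_out h1 h2); case: (H1 h1) => ->.
rewrite memL => /andP [h1 h2]; exists (p z); first by rewrite memL (pm_out h1 h2); case: (H1 h1) => ->.
by case: (H1 h1) => _ ->.
Qed.

Lemma stepA u : u \in pm ->
  \sum_(z <- labels w | z \notin pm) fdot (filament w p u) (filament w p z) =
  Psi w pm (pos w (u, true)) - Psi w pm (pos w (p u, false)).
Proof.
move=> upm.
have ul := H2 upm; have pul : p u \in labels w by case: (H1 ul).
have m1 : (p u, false) \in w by rewrite (valid_mem _ vw).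
set a := pos w (p u, false); set b := pos w (u, true).
have ab : a != b by apply: index_neq => //; rewrite xpair_eqE andbF.
rewrite /filament.
under eq_bigr do rewrite fdotE.
rewrite sumrB (reindex (fun z => bz (inarc a b (pos w (z, false))))).
set G := fun e : endpt => sg e * bz (inarc a b (index e w)).
have -> : \sum_(z <- labels w | z \notin pm) bz (inarc a b (pos w (z, false))) -
          \sum_(z <- labels w | z \notin pm) bz (inarc a b (pos w (z, true))) =
          \sum_(z <- labels w | z \notin pm) (G (z, true) + G (z, false)).
  by rewrite -sumrB; apply: eq_bigr => z _; rewrite /G /sg /pos /=; lia.
rewrite -(sum_PL (fun z => z \notin pm) G vw) /G.
have -> : \sum_(e <- w | e.1 \notin pm) sg e * bz (inarc a b (index e w)) =
   \sum_(e <- w | e.1 \notin pm) sg e * bz (index e w < b)%N -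
   \sum_(e <- w | e.1 \notin pm) sg e * bz (index e w < a)%N -
   \sum_(e <- w | e.1 \notin pm) sg e * bz (index e w == a) +
   bz (b < a)%N * \sum_(e <- w | e.1 \notin pm) sg e.
  rewrite mulr_sumr -!sumrB -big_split /=; apply: eq_bigr => e _.
  rewrite inarc_decomp //; ring.
have -> : \sum_(e <- w | e.1 \notin pm) sg e = 0.
  rewrite (sum_PL (fun z => z \notin pm) sg vw) big1 // => z _; by rewrite /sg /= addrC subrr.
have -> : \sum_(e <- w | e.1 \notin pm) sg e * bz (index e w == a) = 0.
  apply: big1_seq => e /andP [Pe ew]; rewrite /bz; case: eqP => [h|_]; last by rewrite mulr0.
  have := index_eq_elt ew m1 h => ee; move: Pe; rewrite ee /= (H3 upm) //.
by rewrite /Psi mulr0 addr0 subr0.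
Qed.

End Bridge.

Lemma Qs_pm w pm k : valid_ocd w -> uniq pm -> {subset pm <= labels w} ->
  Qs w pm k = \sum_(u <- pm) (- bz (index (u, true) w < k)%N + bz (index (u, false) w < k)%N).
Proof.
move=> vw U H2; rewrite /Qs (sum_PL (fun z => z \in pm) _ vw) -big_filter.
apply: etrans (perm_big _ _) _; last first.
  apply: eq_bigr => u _; rewrite /sg /=; lia.
apply: uniq_perm; rewrite ?filter_uniq ?undup_uniq //.
by move=> z; rewrite mem_filter andb_idr // => /H2.
Qed.

Lemma bz_pair (i j : nat) : i != j -> bz (i < j)%N + bz (j < i)%N = 1.
Proof. by rewrite /bz; case: ltngtP. Qed.

Lemma bz_diag (i : nat) : bz (i < i)%N = 0.
Proof. by rewrite ltnn. Qed.

Lemma Iof_ind w p x : valid_ocd w -> is_pairing w p -> x \in labels w ->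
  Iof w p x = \sum_(u <- pair_members p x) ind w u.
Proof.
move=> vw hp xl.
have H1 : forall z, z \in labels w -> (p z \in labels w) /\ p (p z) = z by exact: hp.
have [pxl ppx] := H1 x xl.
have U := valid_uniq vw.
have mem : forall z c, z \in labels w -> (z, c) \in w by move=> z c zl; rewrite (valid_mem _ vw).
have H2 : {subset pair_members p x <= labels w}.
  rewrite /pair_members; case: eqP => _ u; rewrite !inE.
    by move/eqP ->.
  by case/orP => /eqP ->.
have H3 : {in pair_members p x, forall u, p u \in pair_members p x}.
  rewrite /pair_members; case: eqP => h u; rewrite !inE ?orbF.
    by move/eqP ->; rewrite h.
  by case/orP => /eqP ->; rewrite ?ppx eqxx ?orbT.
rewrite /Iof (eq_big_seq _ (stepA vw H1 H2 H3)).
have indE : forall u, ind w u = Phi w (index (u, true) w) - Phi w (index (u, false) w) - 1.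
  by move=> u; rewrite /ind !before_Phi.
have Up : uniq (pair_members p x).
  by rewrite /pair_members; case: eqP => // /eqP h; rewrite /= inE eq_sym h.
have QE := fun k => Qs_pm k vw Up H2.
have ne : forall z1 c1 z2 c2, z1 \in labels w -> (z1, c1) != (z2, c2) ->
  index (z1, c1) w != index (z2, c2) w by move=> z1 c1 z2 c2 h1 h; apply: index_neq => //; exact: mem.
rewrite [RHS](eq_bigr _ (fun u _ => indE u)).
move: QE H2 H3 Up; rewrite /pair_members /pos; case: eqP => h QE _ _ _.
  rewrite !big_cons !big_nil !(PhiE w [:: x]) !QE !big_cons !big_nil h !bz_diag.
  set i1 := index (x, true) w; set i2 := index (x, false) w.
  have : bz (i1 < i2)%N + bz (i2 < i1)%N = 1.
    exact: bz_pair (ne x true x false xl ltac:(by rewrite xpair_eqE andbF)).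
  move: (Psi w [:: x]) => P; lia.
rewrite !big_cons !big_nil !(PhiE w [:: x; p x]) !QE !big_cons !big_nil ppx !bz_diag.
have yl := pxl.
have xy : x != p x by apply/eqP => e; apply: h; rewrite -e.
set i1 := index (x, true) w; set i2 := index (x, false) w.
set j1 := index (p x, true) w; set j2 := index (p x, false) w.
move: (Psi w [:: x; p x]) => P.
have : bz (i1 < i2)%N + bz (i2 < i1)%N = 1.
  exact: bz_pair (ne x true x false xl ltac:(by rewrite xpair_eqE andbF)).
have : bz (j1 < j2)%N + bz (j2 < j1)%N = 1.
  exact: bz_pair (ne (p x) true (p x) false yl ltac:(by rewrite xpair_eqE andbF)).
have : bz (i1 < j1)%N + bz (j1 < i1)%N = 1.
  exact: bz_pair (ne x true (p x) true xl ltac:(by rewrite xpair_eqE andbT)).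
have : bz (i1 < j2)%N + bz (j2 < i1)%N = 1.
  exact: bz_pair (ne x true (p x) false xl ltac:(by rewrite xpair_eqE andbF)).
have : bz (i2 < j1)%N + bz (j1 < i2)%N = 1.
  exact: bz_pair (ne x false (p x) true xl ltac:(by rewrite xpair_eqE andbF)).
have : bz (i2 < j2)%N + bz (j2 < i2)%N = 1.
  exact: bz_pair (ne x false (p x) false xl ltac:(by rewrite xpair_eqE andbT)).
lia.
Qed.

Lemma bal_filam w : valid_ocd w -> balanced w -> admits_filamentation w.
Proof.
move=> vw bw.
pose Lf := fun n => filter (fun z => ind w z == n) (labels w).
have uLf : forall n, uniq (Lf n) by move=> n; rewrite filter_uniq // undup_uniq.
have mLf : forall n z, (z \in Lf n) = (z \in labels w) && (ind w z == n).
  by move=> n z; rewrite mem_filter andbC.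
pose p := fun x => nth x (Lf (- ind w x)) (index x (Lf (ind w x))).
have key : forall x, x \in labels w ->
    [/\ p x \in labels w, ind w (p x) = - ind w x & p (p x) = x].
  move=> x xl; set n := ind w x.
  have xin : x \in Lf n by rewrite mLf xl eqxx.
  have isz : (index x (Lf n) < size (Lf (- n)))%N.
    have : (index x (Lf n) < size (Lf n))%N by rewrite index_mem.
    by rewrite /Lf !size_filter bw.
  have yin : p x \in Lf (- n) by rewrite /p -/n; apply: mem_nth.
  move: (yin); rewrite mLf => /andP [yl /eqP yi].
  split => //.
  rewrite /p yi opprK -/n.
  rewrite -[nth x (Lf (- n)) (index x (Lf n))]/(p x).
  rewrite /p -/n index_uniq //.
  exact: nth_index.
exists p; split.
  by move=> x xl; case: (key x xl) => ? _ ?.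
move=> x xl; rewrite Iof_ind //; last by move=> z zl; case: (key z zl) => ? _ ?.
case: (key x xl) => _ hi _.
rewrite /pair_members; case: eqP => h; rewrite !big_cons !big_nil.
  by move: hi; rewrite h => hi; lia.
by rewrite hi; lia.
Qed.

Theorem theorem5 (w : ocd) :
  valid_ocd w -> ~ admits_filamentation w -> ~ flat_equiv w trivial_ocd.
Proof.
move=> vw nf fe.
have [_ bw] : Inv w by apply/(equiv_inv fe); split.
by apply: nf; exact: bal_filam.
Qed.
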